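(* Let $n\ge4$. The unique $S_n$-submodule of $\mathcal{L}_n$ isomorphic to $\{n-2,2\}$ is $$W_n:=\{Q=(q_{ij})\in\mathcal{L}_n: Q=Q^T,\ q_{ii}=0\ \forall i\},$$ and moreover $W_n=\operatorname{span}_{\mathbb{R}}\big(L_{(ij)(kl)}-L_{(ik)(jl)}: i,j,k,l\in[n]\text{ pairwise distinct}\big)$.
   Context: Let $\mathbf{1}\in\mathbb{R}^n$ be the all-ones column vector and $\mathcal{L}_n=\{Q\in \mathrm{Mat}_n(\mathbb{R}): Q\mathbf{1}=0\}$. For $\sigma\in S_n$, $K_\sigma$ is the permutation matrix with $e_iK_\sigma=e_{\sigma(i)}$ and $L_\sigma:=K_\sigma-I_n$. $S_n$ acts on $\mathcal{L}_n$ by $\sigma\cdot X=K_\sigma^TXK_\sigma$. $\{n-2,2\}$ denotes the irreducible real $S_n$-module labelled by the partition $(n-2,2)$; it occurs with multiplicity one in $\mathcal{L}_n$ for $n\ge4$. *)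

(* Defs.v *)
From HB Require Import structures.
From mathcomp Require Import all_boot all_order all_algebra all_fingroup.
From mathcomp Require Import reals.
Set Implicit Arguments. Unset Strict Implicit. Unset Printing Implicit Defensive.
Import Order.TTheory GRing.Theory Num.Theory.
Local Open Scope ring_scope.

Section Defs.
Variables (R : realType) (n : nat).

(* K_sigma : e_i K_sigma = e_{sigma i}, i.e. K_sigma i j = (sigma i == j). *)
Definition Kmx (s : 'S_n) : 'M[R]_n := perm_mx s.
Definition Lmx (s : 'S_n) : 'M[R]_n := Kmx s - 1%:M.

Definition actL (s : 'S_n) (X : 'M[R]_n) : 'M[R]_n := (Kmx s)^T *m X *m Kmx s.

Definition inLn (Q : 'M[R]_n) : bool := Q *m (const_mx 1 : 'cV[R]_n) == 0.

Definition is_submodule (U : {vspace 'M[R]_n}) : Prop :=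
  (forall Q, Q \in U -> inLn Q) /\ (forall s Q, Q \in U -> actL s Q \in U).

(* The Specht module {n-2,2}: the span of the polytabloids inside the
   permutation module on tabloids of shape (n-2,2); a tabloid is identified
   with its second row, a 2-subset of [n]. *)
Definition FT := {ffun {set 'I_n} -> R^o}.

Definition tab (A : {set 'I_n}) : FT := [ffun B => (B == A)%:R].

(* polytabloid of the tableau with columns {c,a}, {d,b} and second row (a,b) *)
Definition polytab (a b c d : 'I_n) : FT :=
  tab [set a; b] - tab [set c; b] - tab [set a; d] + tab [set c; d].

Definition distinct4 (i j k l : 'I_n) : bool :=
  [&& i != j, i != k, i != l, j != k, j != l & k != l].

Definition polytabs : seq FT :=
  [seq polytab t.1.1.1 t.1.1.2 t.1.2 t.2 |
     t <- enum [pred t : 'I_n * 'I_n * 'I_n * 'I_n |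
                  distinct4 t.1.1.1 t.1.1.2 t.1.2 t.2]].

Definition specht : {vspace FT} := <<polytabs>>%VS.

(* permutation action on the tabloid module: (sigma . f)(A) = f(sigma^-1 A),
   so that sigma . e_A = e_{sigma A}, matching the action on matrices,
   (sigma . X)_{ij} = X_{sigma^-1 i, sigma^-1 j}. *)
Definition actT (s : 'S_n) (f : FT) : FT := [ffun A : {set 'I_n} => f ((s^-1)%g @: A)].

Definition iso_specht (U : {vspace 'M[R]_n}) : Prop :=
  exists phi : 'M[R]_n -> FT,
    [/\ {in U &, forall (X Y : 'M[R]_n) (a : R), phi (a *: X + Y) = a *: phi X + phi Y},
        {in U &, injective phi},
        (forall f, f \in specht <-> exists2 X, X \in U & phi X = f)
      & (forall s X, X \in U -> phi (actL s X) = actT s (phi X))].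

Definition inWn (Q : 'M[R]_n) : bool :=
  [&& inLn Q, Q^T == Q & [forall i, Q i i == 0]].

Definition Wgens : seq 'M[R]_n :=
  [seq Lmx (tperm t.1.1.1 t.1.1.2 * tperm t.1.2 t.2)%g
       - Lmx (tperm t.1.1.1 t.1.2 * tperm t.1.1.2 t.2)%g |
     t <- enum [pred t : 'I_n * 'I_n * 'I_n * 'I_n |
                  distinct4 t.1.1.1 t.1.1.2 t.1.2 t.2]].

End Defs.

(* Main.v *)
Require Import Defs.
From HB Require Import structures.
From mathcomp Require Import all_boot all_order all_algebra all_fingroup.
From mathcomp Require Import reals.
From mathcomp.algebra_tactics Require Import ring lra.
Set Implicit Arguments. Unset Strict Implicit. Unset Printing Implicit Defensive.
Import Order.TTheory GRing.Theory Num.Theory.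
Local Open Scope ring_scope.

Lemma neq_sym' (T : eqType) (a b : T) : a != b -> b != a.
Proof. by rewrite eq_sym. Qed.

Ltac simpeq := rewrite ?eqxx /=; repeat (match goal with H : is_true (?a != ?b) |- _ =>
   progress rewrite ?(negbTE H) ?(negbTE (neq_sym' H)) ?eqxx /= end).

Section Work.
Variables (R : realType) (n : nat).
Local Notation M := 'M[R]_n.

Lemma actLE (s : 'S_n) (X : M) i j : actL s X i j = X (s^-1 i)%g (s^-1 j)%g.
Proof.
rewrite /actL /Kmx tr_perm_mx -row_permE.
have -> : forall Y : M, Y *m perm_mx s = col_perm s^-1 Y.
  by move=> Y; rewrite col_permE invgK.
by rewrite !mxE.
Qed.

Lemma rowsumE (Q : M) i : (Q *m (const_mx 1 : 'cV[R]_n)) i 0 = \sum_j Q i j.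
Proof. by rewrite mxE; apply: eq_bigr => j _; rewrite mxE mulr1. Qed.

Lemma inLnP (Q : M) : reflect (forall i, \sum_j Q i j = 0) (inLn Q).
Proof.
apply: (iffP eqP) => [H i|H].
  by rewrite -rowsumE H mxE.
by apply/matrixP => i j; rewrite ord1 rowsumE H mxE.
Qed.

Lemma inWnP (Q : M) : reflect [/\ forall i, \sum_j Q i j = 0,
   forall i j, Q j i = Q i j & forall i, Q i i = 0] (inWn Q).
Proof.
apply: (iffP and3P) => [[/inLnP H1 /eqP H2 /forallP H3]|[H1 H2 H3]].
  split=> // [i j|i]; last by apply/eqP.
  by rewrite -{1}H2 mxE.
split; first by apply/inLnP.
  by apply/eqP/matrixP => i j; rewrite mxE.
by apply/forallP => i; rewrite H3.
Qed.

Lemma inWn0 : inWn (0 : M).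
Proof. by apply/inWnP; split=> *; rewrite ?mxE // big1 // => j _; rewrite mxE. Qed.

Lemma inWnDZ (a : R) (X Y : M) : inWn X -> inWn Y -> inWn (a *: X + Y).
Proof.
move=> /inWnP [X1 X2 X3] /inWnP [Y1 Y2 Y3]; apply/inWnP; split.
- move=> i; under eq_bigr do rewrite !mxE.
  by rewrite big_split /= -mulr_sumr X1 Y1 mulr0 addr0.
- by move=> i j; rewrite !mxE X2 Y2.
- by move=> i; rewrite !mxE X3 Y3 mulr0 addr0.
Qed.

Definition S (x y : 'I_n) : M := delta_mx x y + delta_mx y x.
Definition E (a b c d : 'I_n) : M := S a b - S c b - S a d + S c d.

Lemma SE x y i j : S x y i j = ((i == x) && (j == y))%:R + ((i == y) && (j == x))%:R.
Proof. by rewrite !mxE. Qed.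

Lemma Ssym x y i j : S x y j i = S x y i j.
Proof. by rewrite !SE addrC (andbC (j == y)) (andbC (j == x)). Qed.

Lemma EE a b c d i j : E a b c d i j = S a b i j - S c b i j - S a d i j + S c d i j.
Proof. by rewrite !mxE. Qed.

Lemma sum_pick (F : 'I_n -> R) y : \sum_j ((j == y)%:R * F j) = F y.
Proof.
rewrite (bigD1 y) //= eqxx mul1r big1 ?addr0 // => j /negbTE ->.
by rewrite mul0r.
Qed.

Lemma rowsumS x y i : \sum_j S x y i j = (i == x)%:R + (i == y)%:R.
Proof.
under eq_bigr do rewrite SE.
rewrite big_split /=.
have H : forall u v, \sum_(j < n) ((i == u) && (j == v))%:R = (i == u)%:R :> R.
  move=> u v; case: (i == u) => /=; last by rewrite big1.
  by rewrite -[RHS](sum_pick (fun=> 1) v); apply: eq_bigr => j _; rewrite mulr1.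
by rewrite !H.
Qed.

Lemma E_inWn a b c d : a != b -> a != d -> c != b -> c != d -> inWn (E a b c d).
Proof.
move=> hab had hcb hcd; apply/inWnP; split.
- move=> i; under eq_bigr do rewrite EE.
  rewrite !big_split /= !sumrN !rowsumS.
  move: ((i == a)%:R : R) ((i == b)%:R : R) ((i == c)%:R : R) ((i == d)%:R : R) => x y z w.
  ring.
- by move=> i j; rewrite !EE !(Ssym _ _ j i).
move=> i; rewrite EE !SE.
have [->|hia] := eqVneq i a; first by simpeq; rewrite ?andbF /=; ring.
have [->|hic] := eqVneq i c; first by simpeq; rewrite ?andbF /=; ring.
by simpeq; rewrite ?andbF /=; ring.
Qed.
Lemma tpermE' (x y z : 'I_n) : tperm x y z = if z == x then y else if z == y then x else z.
Proof. by rewrite permE /=; case: eqP => // _; case: eqP. Qed.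

Ltac cases5 x a b c d :=
  have [->|?] := eqVneq x a; [|have [->|?] := eqVneq x b;
  [|have [->|?] := eqVneq x c; [|have [->|?] := eqVneq x d]]].

Lemma gensE i j k l : distinct4 i j k l ->
  Lmx R (tperm i j * tperm k l)%g - Lmx R (tperm i k * tperm j l)%g = E i j l k.
Proof.
rewrite /distinct4 => /andP [hij /and5P [hik hil hjk hjl hkl]].
rewrite /Lmx /Kmx opprB addrA subrK.
apply/matrixP => x y; rewrite EE !SE !mxE !permM.
cases5 x i j k l; rewrite !tpermE'; simpeq; rewrite ?(eq_sym y); ring.
Qed.

Lemma span_ind (K : fieldType) (vT : vectType K) (s : seq vT) (P : vT -> Prop) :
  P 0 -> (forall a x y, P x -> P y -> P (a *: x + y)) -> (forall x, x \in s -> P x) ->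
  forall v, v \in <<s>>%VS -> P v.
Proof.
move=> P0 PD Ps v /(@coord_span _ _ _ (in_tuple s)) ->.
apply: (big_ind P) => //.
  by move=> x y Px Py; rewrite -[x]scale1r; apply: PD.
move=> i _; rewrite -[_ *: _]addr0; apply: PD => //; apply: Ps.
by apply: mem_nth; exact: ltn_ord.
Qed.

Lemma dist_sw34 (a b c d : 'I_n) : distinct4 a b c d -> distinct4 a b d c.
Proof.
rewrite /distinct4 => /andP [? /and5P [? ? ? ? ?]]; simpeq; by [].
Qed.

Lemma memWgens X : X \in Wgens R n -> exists a b c d, distinct4 a b c d /\ X = E a b c d.
Proof.
case/mapP => [[[[i j] k] l]]; rewrite mem_enum /= => H ->.
by exists i, j, l, k; split; [apply: dist_sw34 | rewrite gensE].
Qed.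

Lemma E_in_gens (a b c d : 'I_n) : distinct4 a b c d -> E a b c d \in Wgens R n.
Proof.
move=> H; apply/mapP; exists (a, b, d, c); first by rewrite mem_enum /=; apply: dist_sw34.
by rewrite /= gensE // dist_sw34.
Qed.

Local Notation V := (<<Wgens R n>>%VS).

Lemma E_in_V (a b c d : 'I_n) : distinct4 a b c d -> E a b c d \in V.
Proof. by move=> H; apply: memv_span; apply: E_in_gens. Qed.

Lemma V_inWn X : X \in V -> inWn X.
Proof.
move: X; apply: (@span_ind _ _ _ (fun X : M => inWn X)); [exact: inWn0 | by move=> *; apply: inWnDZ |].
move=> Y /memWgens [a [b [c [d [H ->]]]]].
move: H; rewrite /distinct4 => /andP [? /and5P [? ? ? ? ?]].
by apply: E_inWn => //; apply: neq_sym'.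
Qed.

Lemma zeroN (o e f : 'I_n) (N : M) : o != e -> o != f -> e != f -> inWn N ->
  (forall x y, x != o -> x != e -> y != o -> y != e -> N x y = 0) ->
  (forall y, y != o -> y != e -> y != f -> N o y = 0) -> N = 0.
Proof.
move=> hoe hof hef /inWnP [N1 N2 N3] Nb Nr.
have heo := neq_sym' hoe; have hfo := neq_sym' hof; have hfe := neq_sym' hef.
have rs : forall x, N x o + (N x e + (N x f +
     \sum_(j | (j != o) && (j != e) && (j != f)) N x j)) = 0.
  have hf : (f != o) && (f != e) by rewrite hfo hfe.
  by move=> x; move: (N1 x); rewrite (bigD1 o) //= (bigD1 e) //= (bigD1 f) //=.
have h1 : forall x, x != o -> x != e -> x != f -> N x e = 0.
  move=> x xo xe xf; have := rs x.
  rewrite (N2 o x) Nr // (Nb x f) // big1 ?addr0 ?add0r //.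
  by move=> j /andP [/andP [jo je] jf]; apply: Nb.
have ro : N o e + N o f = 0.
  have := rs o; rewrite N3 add0r big1 ?addr0 //.
  by move=> j /andP [/andP [jo je] jf]; apply: Nr.
have re : N e o + N e f = 0.
  have := rs e; rewrite N3 add0r big1 ?addr0 //.
  by move=> j /andP [/andP [jo je] jf]; rewrite -N2 h1.
have rf : N f o + N f e = 0.
  have := rs f; rewrite N3 big1 ?addr0 //.
  by move=> j /andP [/andP [jo je] jf]; apply: Nb.
have Nof : N o f = 0.
  have := N2 o f; have := N2 o e; have := N2 e f; lra.
have Noe : N o e = 0 by lra.
have Neo : N e o = 0 by rewrite N2.
have Nfo : N f o = 0 by rewrite N2.
have Nef : N e f = 0 by lra.
have Nfe : N f e = 0 by rewrite N2.
apply/matrixP => x y; rewrite mxE.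
have [->|xo] := eqVneq x o.
  have [->|yo] := eqVneq y o; first exact: N3.
  have [->|ye] := eqVneq y e; first exact: Noe.
  have [->|yf] := eqVneq y f; first exact: Nof.
  exact: Nr.
have [->|xe] := eqVneq x e.
  have [->|yo] := eqVneq y o; first exact: Neo.
  have [->|ye] := eqVneq y e; first exact: N3.
  have [->|yf] := eqVneq y f; first exact: Nef.
  by rewrite -N2 h1.
have [->|yo] := eqVneq y o.
  have [->|xf] := eqVneq x f; first exact: Nfo.
  by rewrite -N2 Nr.
have [->|ye] := eqVneq y e.
  have [->|xf] := eqVneq x f; first exact: Nfe.
  exact: h1.
exact: Nb.
Qed.

Lemma sum2_pick (F : 'I_n -> 'I_n -> R) x y :
  \sum_i \sum_j (F i j * ((x == i) && (y == j))%:R) = F x y.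
Proof.
rewrite (bigD1 x) //= [X in _ + X = _]big1 ?addr0.
  rewrite ?eqxx /= -[RHS](sum_pick (F x) y); apply: eq_bigr => j _.
  by rewrite mulrC eq_sym.
move=> i /negbTE hi; rewrite big1 // => j _.
by rewrite eq_sym hi /= mulr0.
Qed.

Lemma sum2_pick' (F : 'I_n -> 'I_n -> R) x y :
  \sum_i \sum_j (F i j * ((x == j) && (y == i))%:R) = F y x.
Proof.
rewrite exchange_big /= -[RHS](sum2_pick (fun j i => F i j) x y).
by apply: eq_bigr => i _; apply: eq_bigr => j _; rewrite andbC.
Qed.

Lemma mxBE (X Y : M) x y : (X - Y) x y = X x y - Y x y.
Proof. by rewrite !mxE. Qed.

Lemma inWn_V (Q : M) : (3 <= n)%N -> inWn Q -> Q \in V.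
Proof.
move=> n3 HQ.
have h0 : (0 < n)%N by apply: leq_trans n3.
have h1 : (1 < n)%N by apply: leq_trans n3.
have h2 : (2 < n)%N by [].
pose o := Ordinal h0; pose e := Ordinal h1; pose f := Ordinal h2.
have hoe : o != e by []. have hof : o != f by []. have hef : e != f by [].
have heo := neq_sym' hoe; have hfo := neq_sym' hof; have hfe := neq_sym' hef.
case/inWnP: (HQ) => Q1 Q2 Q3.
pose c i j := if [&& i != o, i != e, j != o, j != e & i != j] then Q i j / 2 else 0.
pose A := \sum_i \sum_j c i j *: E i j o e.
have AV : A \in V.
  apply: memv_suml => i _; apply: memv_suml => j _; rewrite /c.
  case: ifP => [/and5P [io ie jo je ij]|_]; last by rewrite scale0r mem0v.
  by apply: memvZ; apply: E_in_V; rewrite /distinct4 ij io ie jo je hoe.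
have Aent : forall x y, x != o -> x != e -> y != o -> y != e -> A x y = Q x y.
  move=> x y xo xe yo ye.
  have HE : forall i j, E i j o e x y = ((x == i) && (y == j))%:R + ((x == j) && (y == i))%:R.
    move=> i j; rewrite EE !SE; simpeq; rewrite ?andbF /=; ring.
  rewrite summxE.
  under eq_bigr do rewrite summxE.
  under eq_bigr do under eq_bigr do rewrite mxE HE mulrDr.
  under eq_bigr do rewrite big_split /=.
  rewrite big_split /= sum2_pick sum2_pick' /c xo xe yo ye /=.
  have [->|xy] := eqVneq x y; first by rewrite Q3 addr0.
  by rewrite /= (Q2 x y); field.
pose Mx := Q - A.
have MW : inWn Mx.
  have -> : Mx = (-1) *: A + Q by rewrite scaleN1r addrC.
  by apply: inWnDZ => //; apply: V_inWn.
have Mb : forall x y, x != o -> x != e -> y != o -> y != e -> Mx x y = 0.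
  by move=> u v uo ue vo ve; rewrite !mxE Aent // subrr.
pose d j := if [&& j != o, j != e & j != f] then Mx o j else 0.
pose B := \sum_j d j *: E o j e f.
have BV : B \in V.
  apply: memv_suml => j _; rewrite /d.
  case: ifP => [/and3P [jo je jf]|_]; last by rewrite scale0r mem0v.
  by apply: memvZ; apply: E_in_V; rewrite /distinct4; simpeq.
have Bb : forall x y, x != o -> x != e -> y != o -> y != e -> B x y = 0.
  move=> x y xo xe yo ye; rewrite summxE big1 // => j _.
  by rewrite mxE EE !SE; simpeq; rewrite ?andbF /=; ring.
have Br : forall y, y != o -> y != e -> y != f -> B o y = Mx o y.
  move=> y yo ye yf; have -> : Mx o y = d y by rewrite /d yo ye yf.
  rewrite summxE -(sum_pick d y); apply: eq_bigr => j _.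
  by rewrite mxE EE !SE; simpeq; rewrite ?andbF /= (eq_sym y j); ring.
pose N := Mx - B.
have NW : inWn N.
  have -> : N = (-1) *: B + Mx by rewrite scaleN1r addrC.
  by apply: inWnDZ => //; apply: V_inWn.
have N0 : N = 0.
  apply: (zeroN hoe hof hef NW).
    by move=> x y xo xe yo ye; rewrite mxBE Mb // Bb // subrr.
  by move=> y yo ye yf; rewrite mxBE Br // subrr.
have -> : Q = A + B by move: N0; rewrite /N /Mx => /eqP; rewrite subr_eq0 subr_eq => /eqP ->; rewrite addrC.
exact: memvD.
Qed.

Lemma inWn_actL (s : 'S_n) (Q : M) : inWn Q -> inWn (actL s Q).
Proof.
case/inWnP => Q1 Q2 Q3; apply/inWnP; split.
- move=> i; under eq_bigr do rewrite actLE.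
  rewrite (reindex_inj (@perm_inj _ s)) /=.
  under eq_bigr do rewrite permK.
  exact: Q1.
- by move=> i j; rewrite !actLE Q2.
- by move=> i; rewrite actLE Q3.
Qed.

Local Notation FT := (FT R n).
Local Notation tab := (@tab R n).
Local Notation polytab := (@polytab R n).

Definition phi (X : M) : FT := \sum_i \sum_j (X i j / 2) *: tab [set i; j].

Lemma phiE X B : phi X B = \sum_i \sum_j (X i j / 2 * (B == [set i; j])%:R).
Proof.
rewrite sum_ffunE; apply: eq_bigr => i _; rewrite sum_ffunE; apply: eq_bigr => j _.
by rewrite !ffunE.
Qed.

Lemma scaleRo (a x : R) : a *: (x : R^o) = a * x.
Proof. by []. Qed.

Lemma phi_lin a X Y : phi (a *: X + Y) = a *: phi X + phi Y.
Proof.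
apply/ffunP => B; rewrite !ffunE !phiE scaler_sumr -big_split; apply: eq_bigr => i _.
rewrite scaler_sumr -big_split; apply: eq_bigr => j _; rewrite !mxE.
rewrite scaleRo !mulrDl -!mulrA; reflexivity.
Qed.

Lemma phi0 : phi 0 = 0.
Proof.
apply/ffunP => B; rewrite phiE ffunE big1 // => i _; rewrite big1 // => j _.
by rewrite mxE mul0r mul0r.
Qed.

Lemma phiD X Y : phi (X + Y) = phi X + phi Y.
Proof. by have := phi_lin 1 X Y; rewrite !scale1r. Qed.

Lemma phiN X : phi (- X) = - phi X.
Proof. by have := phi_lin (-1) X 0; rewrite !scaleN1r !addr0 phi0 addr0. Qed.

Lemma phiB X Y : phi (X - Y) = phi X - phi Y.
Proof. by rewrite phiD phiN. Qed.

Lemma phiS x y : phi (S x y) = tab [set x; y].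
Proof.
apply/ffunP => B; rewrite phiE ffunE.
have -> : (B == [set x; y])%:R = (B == [set x; y])%:R / 2 + (B == [set y; x])%:R / 2 :> R.
  by rewrite setUC; field.
rewrite -(sum2_pick (fun i j => (B == [set i; j])%:R / 2) x y).
rewrite -(sum2_pick (fun i j => (B == [set i; j])%:R / 2) y x) -big_split.
apply: eq_bigr => i _; rewrite -big_split; apply: eq_bigr => j _.
rewrite SE (eq_sym i x) (eq_sym j y) (eq_sym i y) (eq_sym j x) -[RHS]/(_ + _); ring.
Qed.

Lemma phiE_E a b c d : phi (E a b c d) = polytab a b c d.
Proof. by rewrite /E phiD !phiB !phiS. Qed.

Lemma imset_perm2 (s : 'S_n) i j : [set s i; s j] = s @: [set i; j].
Proof. by rewrite imsetU1 imset_set1. Qed.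

Lemma eq_imsetV (s : 'S_n) (B A : {set 'I_n}) : (B == s @: A) = ((s^-1)%g @: B == A).
Proof.
apply/eqP/eqP => [->|<-].
  by rewrite -imset_comp (eq_imset _ (permK s)) imset_id.
by rewrite -imset_comp (eq_imset _ (permKV s)) imset_id.
Qed.

Lemma phi_equiv s X : phi (actL s X) = actT s (phi X).
Proof.
apply/ffunP => B; rewrite /actT ffunE !phiE.
rewrite (reindex_inj (@perm_inj _ s)) /=; apply: eq_bigr => i _.
rewrite (reindex_inj (@perm_inj _ s)) /=; apply: eq_bigr => j _.
by rewrite actLE !permK imset_perm2 eq_imsetV.
Qed.

Lemma pair_neq (u : 'I_n) (A B : {set 'I_n}) : u \in A -> u \notin B -> (A == B) = false.
Proof. by move=> uA uB; apply/negP => /eqP H; move: uB; rewrite -H uA. Qed.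

Lemma pair_neq' (u : 'I_n) (A B : {set 'I_n}) : u \notin A -> u \in B -> (A == B) = false.
Proof. by move=> uA uB; apply/negP => /eqP H; move: uA; rewrite H uB. Qed.

Lemma phi_eval Z i j : inWn Z -> i != j -> phi Z [set i; j] = Z i j.
Proof.
case/inWnP => Z1 Z2 Z3 ij; have ji := neq_sym' ij.
rewrite phiE (bigD1 i) //= [X in _ + X](bigD1 j) //=.
rewrite [X in _ + (_ + X)]big1 ?addr0; last first.
  move=> a /andP [ai aj]; rewrite big1 // => b _.
  by rewrite (@pair_neq' a) ?mulr0 // !inE ?eqxx ?orbT // negb_or ai aj.
rewrite [X in X + _](bigD1 j) //= [X in (_ + X) + _]big1 ?addr0; last first.
  move=> b bj; rewrite (@pair_neq j) ?mulr0 // !inE ?eqxx ?orbT //.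
  by rewrite negb_or ji (neq_sym' bj).
rewrite [X in _ + X](bigD1 i) //= [X in _ + (_ + X)]big1 ?addr0; last first.
  move=> b bi; rewrite (@pair_neq i) ?mulr0 // !inE ?eqxx ?orbT //.
  by rewrite negb_or ij (neq_sym' bi).
by rewrite [[set j; i]]setUC !eqxx /= (Z2 i j); field.
Qed.

Lemma mem_polytabs f : f \in polytabs R n ->
  exists a b c d, distinct4 a b c d /\ f = polytab a b c d.
Proof.
case/mapP => [[[[i j] k] l]]; rewrite mem_enum /= => H ->.
by exists i, j, k, l.
Qed.

Lemma polytab_in (a b c d : 'I_n) : distinct4 a b c d -> polytab a b c d \in polytabs R n.
Proof. by move=> H; apply/mapP; exists (a, b, c, d); rewrite ?mem_enum. Qed.

Lemma V_iso : iso_specht V.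
Proof.
exists phi; split.
- by move=> X Y _ _ a; apply: phi_lin.
- move=> X Y HX HY H.
  have HZ : inWn (X - Y) by apply: V_inWn; apply: memvB.
  have PZ : phi (X - Y) = 0 by rewrite phiB H subrr.
  apply/eqP; rewrite -subr_eq0; apply/eqP/matrixP => i j; rewrite [RHS]mxE.
  have [<-|ij] := eqVneq i j; first by case/inWnP: HZ.
  by rewrite -phi_eval // PZ ffunE.
- move=> f; split.
  + move: f; apply: (@span_ind _ _ _ (fun f => exists2 X, X \in V & phi X = f)).
    * by exists 0; rewrite ?mem0v ?phi0.
    * move=> a f g [X HX <-] [Y HY <-]; exists (a *: X + Y); last exact: phi_lin.
      by apply: memvD => //; apply: memvZ.
    * move=> f /mem_polytabs [a [b [c [d [H ->]]]]].
      by exists (E a b c d); [apply: E_in_V | apply: phiE_E].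
  + case=> X HX <-; move: X HX.
    apply: (@span_ind _ _ _ (fun X => phi X \in specht R n)).
    * by rewrite phi0 mem0v.
    * by move=> a X Y HX HY; rewrite phi_lin; apply: memvD => //; apply: memvZ.
    * move=> X /memWgens [a [b [c [d [H ->]]]]].
      by rewrite phiE_E; apply: memv_span; apply: polytab_in.
- by move=> s X _; apply: phi_equiv.
Qed.

Lemma V_sub : (3 <= n)%N -> is_submodule V.
Proof.
move=> n3; split => [Q /V_inWn /and3P [] //| s Q /V_inWn HQ].
by apply: inWn_V => //; apply: inWn_actL.
Qed.

Lemma actT_poly (s : 'S_n) a b c d :
  actT s (polytab a b c d) = polytab (s a) (s b) (s c) (s d).
Proof. by apply/ffunP => B; rewrite !ffunE !imset_perm2 !eq_imsetV. Qed.

Lemma polytab_sw13 a b c d : polytab c b a d = - polytab a b c d.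
Proof. by apply/ffunP => B; rewrite !ffunE; ring. Qed.

Lemma polytab_sw24 a b c d : polytab a d c b = - polytab a b c d.
Proof. by apply/ffunP => B; rewrite !ffunE; ring. Qed.

Lemma polytab_sw a b c d : polytab b a d c = polytab a b c d.
Proof.
apply/ffunP => B; rewrite !ffunE.
rewrite (setUC [set b] [set a]) (setUC [set d] [set a]) (setUC [set b] [set c]).
rewrite (setUC [set d] [set c]); ring.
Qed.

Lemma polytab_ne0 a b c d : distinct4 a b c d -> polytab a b c d != 0.
Proof.
rewrite /distinct4 => /andP [hab /and5P [hac had hbc hbd hcd]].
apply/eqP => /ffunP /(_ [set a; b]); rewrite !ffunE eqxx.
rewrite (@pair_neq a) ?(@pair_neq b [set a; b] [set a; d]) ?(@pair_neq a [set a; b] [set c; d]);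
  rewrite ?inE ?eqxx ?orbT //= ?negb_or ?(neq_sym' hac) ?(neq_sym' hbd) ?(neq_sym' had) //.
- by move/eqP; rewrite !subr0 addr0 oner_eq0.
- by rewrite hac had.
- by rewrite (neq_sym' hab) hbd.
- by rewrite hac hab.
Qed.

Section Uniq.
Variables (U : {vspace M}) (psi : M -> FT).
Hypothesis Uact : forall s Y, Y \in U -> actL s Y \in U.
Hypothesis lin : {in U &, forall (X Y : M) (a : R), psi (a *: X + Y) = a *: psi X + psi Y}.
Hypothesis inj : {in U &, injective psi}.
Hypothesis eqv : forall s Y, Y \in U -> psi (actL s Y) = actT s (psi Y).

Lemma psi0 : psi 0 = 0.
Proof.
have := lin (mem0v U) (mem0v U) 1; rewrite !scale1r addr0 => H.
by apply: (addrI (psi 0)); rewrite addr0 -H.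
Qed.

Lemma psiN Y : Y \in U -> psi (- Y) = - psi Y.
Proof.
move=> HY; have := lin HY (mem0v U) (-1).
by rewrite !scaleN1r !addr0 psi0 addr0.
Qed.

Lemma antirel (s : 'S_n) X : X \in U -> psi (actL s X) = - psi X -> actL s X = - X.
Proof.
by move=> HX H; apply: inj; [apply: Uact | rewrite memvN | rewrite psiN].
Qed.

Lemma symrel (s : 'S_n) X : X \in U -> psi (actL s X) = psi X -> actL s X = X.
Proof. by move=> HX H; apply: inj => //; apply: Uact. Qed.

Lemma struct (a b c d : 'I_n) X : distinct4 a b c d -> X \in U ->
  psi X = polytab a b c d -> X = X a b *: E a b c d.
Proof.
move=> D HX PX; move: (D); rewrite /distinct4 => /andP [hab /and5P [hac had hbc hbd hcd]].
have hba := neq_sym' hab; have hca := neq_sym' hac; have hda := neq_sym' had.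
have hcb := neq_sym' hbc; have hdb := neq_sym' hbd; have hdc := neq_sym' hcd.
have A1 : actL (tperm a c) X = - X.
  apply: antirel => //; rewrite eqv // PX actT_poly !tpermE'; simpeq.
  by rewrite polytab_sw13.
have A2 : actL (tperm b d) X = - X.
  apply: antirel => //; rewrite eqv // PX actT_poly !tpermE'; simpeq.
  by rewrite polytab_sw24.
have A3 : actL (tperm a b * tperm c d) X = X.
  apply: symrel => //; rewrite eqv // PX actT_poly !permM !tpermE'; simpeq.
  by rewrite polytab_sw.
have E1 : forall x y, X (tperm a c x) (tperm a c y) = - X x y.
  by move=> x y; rewrite -[in LHS](tpermV a c) -actLE A1 mxE.
have E2 : forall x y, X (tperm b d x) (tperm b d y) = - X x y.
  by move=> x y; rewrite -[in LHS](tpermV b d) -actLE A2 mxE.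
have Xba : X b a = X a b.
  have := actLE (tperm a b * tperm c d) X a b; rewrite A3 invMg !tpermV !permM.
  by rewrite !tpermE'; simpeq.
have Z1 : forall x y, x != a -> x != c -> y != a -> y != c -> X x y = 0.
  move=> x y xa xc ya yc; have := E1 x y; rewrite !tpermE'; simpeq; lra.
have Z2 : forall x y, x != b -> x != d -> y != b -> y != d -> X x y = 0.
  move=> x y xb xd yb yd; have := E2 x y; rewrite !tpermE'; simpeq; lra.
have Xcb : X c b = - X a b by have := E1 a b; rewrite !tpermE'; simpeq.
have Xad : X a d = - X a b by have := E2 a b; rewrite !tpermE'; simpeq.
have Xcd : X c d = X a b by have := E1 a d; rewrite !tpermE'; simpeq => ->; rewrite Xad opprK.
have Xbc : X b c = - X a b by have := E1 b a; rewrite !tpermE'; simpeq => ->; rewrite Xba.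
have Xda : X d a = - X a b by have := E2 b a; rewrite !tpermE'; simpeq => ->; rewrite Xba.
have Xdc : X d c = X a b by have := E1 d a; rewrite !tpermE'; simpeq => ->; rewrite Xda opprK.
apply/matrixP => x y; rewrite mxE EE !SE.
have [->|xa] := eqVneq x a.
  have [->|yb] := eqVneq y b; first by simpeq; ring.
  have [->|yd] := eqVneq y d; first by rewrite Xad; simpeq; ring.
  by rewrite Z2 //; simpeq; ring.
have [->|xc] := eqVneq x c.
  have [->|yb] := eqVneq y b; first by rewrite Xcb; simpeq; ring.
  have [->|yd] := eqVneq y d; first by rewrite Xcd; simpeq; ring.
  by rewrite Z2 //; simpeq; ring.
have [->|xb] := eqVneq x b.
  have [->|ya] := eqVneq y a; first by rewrite Xba; simpeq; ring.
  have [->|yc] := eqVneq y c; first by rewrite Xbc; simpeq; ring.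
  by rewrite Z1 //; simpeq; ring.
have [->|xd] := eqVneq x d.
  have [->|ya] := eqVneq y a; first by rewrite Xda; simpeq; ring.
  have [->|yc] := eqVneq y c; first by rewrite Xdc; simpeq; ring.
  by rewrite Z1 //; simpeq; ring.
have [->|ya] := eqVneq y a; first by rewrite Z2 //; simpeq; ring.
have [->|yc] := eqVneq y c; first by rewrite Z2 //; simpeq; ring.
by rewrite Z1 //; simpeq; ring.
Qed.

End Uniq.

Lemma V_unique (U : {vspace M}) : is_submodule U -> iso_specht U -> U = V.
Proof.
move=> [_ Uact] [psi [lin inj surj eqv]].
have key : forall a b c d, distinct4 a b c d ->
    exists2 X, X \in U & (psi X = polytab a b c d /\ X = X a b *: E a b c d).
  move=> a b c d D.
  have : polytab a b c d \in specht R n by apply: memv_span; apply: polytab_in.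
  case/surj => X HX PX; exists X => //; split => //.
  exact: (struct Uact lin inj eqv D HX PX).
apply/vspaceP => X; apply/idP/idP => HX.
- have P : forall f, f \in specht R n -> exists2 Y, Y \in U & (Y \in V) /\ psi Y = f.
    apply: (@span_ind _ _ _ (fun f => exists2 Y, Y \in U & (Y \in V) /\ psi Y = f)).
    + by exists 0; rewrite ?mem0v ?(psi0 lin).
    + move=> a f g [Y1 U1 [V1 <-]] [Y2 U2 [V2 <-]]; exists (a *: Y1 + Y2).
        by apply: memvD => //; apply: memvZ.
      split; last exact: lin.
      by apply: memvD => //; apply: memvZ.
    + move=> f /mem_polytabs [a [b [c [d [D ->]]]]].
      case: (key a b c d D) => Y HY [PY EY]; exists Y => //; split => //.
      by rewrite EY; apply: memvZ; apply: E_in_V.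
  have : psi X \in specht R n by apply/surj; exists X.
  case/P => Y HY [VY PY].
  suff -> : X = Y by [].
  by apply: inj; rewrite // PY.
- move: X HX; apply/subvP/span_subvP => g /memWgens [a [b [c [d [D ->]]]]].
  case: (key a b c d D) => Y HY [PY EY].
  have p0 : Y a b != 0.
    apply/eqP => p0; move: PY; rewrite EY p0 scale0r (psi0 lin) => /esym/eqP.
    by rewrite (negbTE (polytab_ne0 D)).
  have -> : E a b c d = (Y a b)^-1 *: Y by rewrite {2}EY scalerA mulVf // scale1r.
  exact: memvZ.
Qed.

End Work.

Theorem mainTheorem12 (R : realType) (n : nat) : (4 <= n)%N ->
  exists W : {vspace 'M[R]_n},
    [/\ (forall Q, Q \in W = inWn Q),
        is_submodule W,
        iso_specht W,
        (forall U : {vspace 'M[R]_n}, is_submodule U -> iso_specht U -> U = W)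
      & W = <<Wgens R n>>%VS].
Proof.
move=> n4; have n3 : (3 <= n)%N by apply: ltnW.
exists <<Wgens R n>>%VS; split.
- by move=> Q; apply/idP/idP; [apply: V_inWn | apply: inWn_V].
- exact: V_sub.
- exact: V_iso.
- by move=> U HU HI; apply: V_unique.
- by [].
Qed.
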